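(* Let $X$ be an affine Poisson scheme of finite type over $k$ with Poisson bivector $\pi$. Then the $\mathcal O$-saturations of the Lie algebras of Hamiltonian and locally Hamiltonian vector fields coincide: $H(X)^{os}=LH(X)^{os}$. Consequently $M(X,H(X))\cong M(X,LH(X))$.
   Context: $k$ is algebraically closed of characteristic zero. $\tilde\Omega^\bullet_X$ is the algebraic de Rham complex of Kähler differentials modulo torsion. $H(X)$ is the Lie algebra of Hamiltonian vector fields $\xi_f=\pi(df)$, $f\in\mathcal O_X$; $LH(X)$ is the Lie algebra of vector fields $\eta_\alpha=\pi(\alpha)$ for closed one-forms $\alpha\in\tilde\Omega^1_X$. For a Lie algebra of vector fields $\mathfrak v$, its $\mathcal O$-saturation is $\mathfrak v^{os}:=\{\sum_i f_i\xi_i : f_i\in\mathcal O_X,\ \xi_i\in\mathfrak v,\ \sum_i\xi_i(f_i)=0\}$. $M(X,\mathfrak v)$ is the quotient of $\mathcal D_X$ (right $\mathcal D$-modules, defined via embeddings into smooth varieties) by the right submodule generated by $\mathfrak v$. *)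

(* Defs.v *)
From HB Require Import structures.
From mathcomp Require Import all_boot all_order all_algebra.
Set Implicit Arguments. Unset Strict Implicit. Unset Printing Implicit Defensive.
Import GRing.Theory.
Local Open Scope ring_scope.

(* An affine scheme X of finite type over k is encoded by its coordinate
   ring A = O(X), a commutative k-algebra generated by a finite sequence. *)
Definition finitely_generated_alg (k : fieldType) (A : comAlgType k) : Prop :=
  exists s : seq A, forall P : pred A,
    GRing.subalg_closed P -> {subset s <= P} -> forall a, P a.

(* Poisson bracket on A (the Poisson bivector pi, via {f,g} = pi(df,dg)). *)
Definition poisson_bracket (k : fieldType) (A : comAlgType k)
    (br : A -> A -> A) : Prop :=
  [/\ forall f, linear (br f),
      forall g, linear (br^~ g),
      forall f g, br f g = - br g f,
      forall f g h, br f (br g h) + br g (br h f) + br h (br f g) = 0 &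
      forall f g h, br f (g * h) = br f g * h + g * br f h].

Definition nonzerodiv (k : fieldType) (A : comAlgType k) (t : A) : Prop :=
  forall a : A, t * a = 0 -> a = 0.

(* Alternating k-bilinear maps A x A -> M that are derivations in each
   argument: by the universal properties of Kaehler differentials and of the
   exterior square, these are exactly the A-linear maps out of
   Omega^2_A = wedge^2_A Omega^1_A, via  B(g,f) = phi(dg /\ df). *)
Definition alt_biderivation (k : fieldType) (A : comAlgType k)
    (M : lmodType A) (B : A -> A -> M) : Prop :=
  [/\ forall g (c : k) a b, B g (c%:A * a + b) = c%:A *: B g a + B g b,
      forall f (c : k) a b, B (c%:A * a + b) f = c%:A *: B a f + B b f,
      forall g a b, B g (a * b) = a *: B g b + b *: B g a,
      forall f a b, B (a * b) f = a *: B b f + b *: B a f &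
      forall a, B a a = 0].

(* A 1-form alpha = sum_i g_i df_i, encoded by the list of pairs (g_i, f_i),
   is closed in the de Rham complex of Kaehler forms modulo torsion iff
   d alpha = sum_i dg_i /\ df_i is a torsion element of Omega^2_A, i.e. is
   killed by some non-zero-divisor t.  Vanishing in Omega^2_A is tested
   against all A-linear maps out of Omega^2_A (universal property). *)
Definition closed_form (k : fieldType) (A : comAlgType k)
    (alpha : seq (A * A)) : Prop :=
  exists2 t : A, nonzerodiv t &
    forall (M : lmodType A) (B : A -> A -> M), alt_biderivation B ->
      t *: (\sum_(p <- alpha) B p.1 p.2) = 0.

Definition hamiltonian (k : fieldType) (A : comAlgType k)
    (br : A -> A -> A) (D : A -> A) : Prop :=
  exists f : A, forall a, D a = br f a.

(* Locally Hamiltonian vector fields eta_alpha = pi(alpha), alpha closed: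
   pi(sum_i g_i df_i) = sum_i g_i {f_i, -}. *)
Definition loc_hamiltonian (k : fieldType) (A : comAlgType k)
    (br : A -> A -> A) (D : A -> A) : Prop :=
  exists2 alpha : seq (A * A), closed_form alpha &
    forall a, D a = \sum_(p <- alpha) p.1 * br p.2 a.

Definition os_sat (k : fieldType) (A : comAlgType k)
    (v : (A -> A) -> Prop) (D : A -> A) : Prop :=
  exists s : seq (A * (A -> A)),
    [/\ foldr (fun p P => v p.2 /\ P) True s,
        \sum_(p <- s) p.2 p.1 = 0 &
        forall a, D a = \sum_(p <- s) p.1 * p.2 a].

(* Main.v *)
Require Import Defs.
From mathcomp Require Import all_boot all_order all_algebra.
Import GRing.Theory.
Local Open Scope ring_scope.

Lemma two_neq0 (k : closedFieldType) : [pchar k]%R =i pred0 -> (2%:R : k) != 0.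
Proof. by move/pcharf0P=> ->. Qed.

Lemma foldr_cat_P (T : Type) (P : T -> Prop) (s t : seq T) :
  foldr (fun p Q => P p /\ Q) True s -> foldr (fun p Q => P p /\ Q) True t ->
  foldr (fun p Q => P p /\ Q) True (s ++ t).
Proof. by elim: s => //= a s IH [Ha Hs] Ht; split => //; apply: IH. Qed.

Lemma closed_sum0 (k : closedFieldType) (A : comAlgType k) (br : A -> A -> A) :
  [pchar k]%R =i pred0 -> poisson_bracket br ->
  forall alpha : seq (A * A), closed_form alpha ->
  \sum_(q <- alpha) br q.2 q.1 = 0.
Proof.
move=> ch [lin1 lin2 anti jac leib] alpha [t tnz Ht].
have brAl : forall f (c : k) a b, br f (c%:A * a + b) = c%:A * br f a + br f b.
  by move=> f c a b; rewrite !mulr_algl (lin1 f).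
have brAr : forall g (c : k) a b, br (c%:A * a + b) g = c%:A * br a g + br b g.
  by move=> g c a b; rewrite !mulr_algl (lin2 g).
have aa : forall a, br a a = 0.
  move=> a; have h : (2%:R : k)%:A * br a a = 0.
    by rewrite -[2%:R]/(1 + 1) scalerDl scale1r mulrDl mul1r {1}anti addNr.
  rewrite mulr_algl in h.
  by rewrite -[br a a]scale1r -(mulVf (@two_neq0 k ch)) -scalerA h scaler0.
pose B := fun g f : A => (br f g : A^o).
have HB : alt_biderivation B.
  split.
  - by move=> g c a b; rewrite /B brAr.
  - by move=> f c a b; rewrite /B brAl.
  - move=> g a b; rewrite /B anti leib /= (anti g a) (anti g b).
    change (- (- br a g * b + a * - br b g) = a * br b g + b * br a g).
    by rewrite mulNr mulrN opprD !opprK addrC [br a g * b]mulrC.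
  - move=> f a b; rewrite /B leib /=.
    change (br f a * b + a * br f b = a * br f b + b * br f a).
    by rewrite addrC [br f a * b]mulrC.
  - by move=> a; rewrite /B aa.
have := Ht _ B HB; rewrite /B /= => H.
by apply: tnz.
Qed.

Theorem proposition3p11 (k : closedFieldType) (A : comAlgType k)
    (br : A -> A -> A) :
  [pchar k]%R =i pred0 ->
  finitely_generated_alg A ->
  poisson_bracket br ->
  forall D : A -> A, os_sat (hamiltonian br) D <-> os_sat (loc_hamiltonian br) D.
Proof.
move=> ch _ pb D; split.
- case=> s [Hs H0 HD]; exists s; split => //.
  elim: s Hs {H0 HD} => //= p s IH [[f Hf] Hs]; split; last exact: IH.
  exists [:: (1, f)].
    exists 1; first by move=> a; rewrite mul1r.
    move=> M B [_ _ _ Bd _]; rewrite big_seq1 scale1r /=.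
    have := Bd f 1 1; rewrite mul1r scale1r => /(congr1 (fun x => x - B 1 f)).
    by rewrite subrr addrK.
  by move=> a; rewrite big_seq1 /= mul1r.
- case=> s [Hs H0 HD].
  have [lin1 lin2 anti jac leib] := pb.
  suff [s' [Hs' E1 E2]] : exists s' : seq (A * (A -> A)),
      [/\ foldr (fun p P => hamiltonian br p.2 /\ P) True s',
          \sum_(p <- s') p.2 p.1 = \sum_(p <- s) p.2 p.1 &
          forall a, \sum_(p <- s') p.1 * p.2 a = \sum_(p <- s) p.1 * p.2 a].
    by exists s'; split => //; [rewrite E1 | move=> a; rewrite E2].
  elim: s Hs {H0 HD} => [|p s IH] /=.
    by move=> _; exists [::].
  case=> [[alpha Hcl Hp] Hs].
  have [s'' [Hs'' E1 E2]] := IH Hs.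
  exists ([seq (p.1 * q.1, br q.2) | q <- alpha] ++ s''); split.
  - apply: foldr_cat_P => //.
    by elim: alpha {Hcl Hp} => //= q al IHa; split => //; exists q.2.
  - rewrite big_cat big_cons /= E1; congr (_ + _).
    rewrite big_map /= Hp.
    under eq_bigr => q _ do rewrite leib.
    rewrite big_split /= -mulr_sumr (@closed_sum0 k A br ch pb _ Hcl) mulr0 addr0.
    by apply: eq_bigr => q _; rewrite mulrC.
  - move=> a; rewrite big_cat big_cons /= E2; congr (_ + _).
    rewrite big_map /= Hp mulr_sumr.
    by apply: eq_bigr => q _; rewrite mulrA.
Qed.
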